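(* Let $(\Gamma,\lambda)$ be a tree plan. For every $B\subseteq\Gamma(\omega)$, the model-theoretic algebraic closure of $B$ in the $\mathcal{L}_\Gamma$-structure $\Gamma(\omega)$ equals $\mathrm{tcl}(B)$.
   Context: Tree plans: a tree plan is a pair $(\Gamma,\lambda)$ where $\Gamma\subseteq\omega^{<\omega}$ is a finite set of finite sequences containing the empty sequence $\langle\rangle$ and closed under initial segments, and $\lambda:\Gamma\to\{1,\infty\}$ with $\lambda(\langle\rangle)=1$. $\Gamma(\omega)$ is the set of finite sequences $\langle(i_0,t_0),\dots,(i_n,t_n)\rangle$ (including the empty one) such that $\langle i_0,\dots,i_n\rangle\in\Gamma$ and for each $k\le n$: $t_k=\star$ (a fixed symbol not in $\omega$) if $\lambda(\langle i_0,\dots,i_k\rangle)=1$, and $t_k\in\omega$ if $\lambda(\langle i_0,\dots,i_k\rangle)=\infty$. It is a tree under the initial-segment order $\le$, in the language $\mathcal{L}_t$ with $\le$, root constant $\varepsilon$ (the empty sequence), meet $\sqcap$ and $\mathtt{pred}$ (delete last entry; $\mathtt{pred}(\varepsilon)=\varepsilon$). The map $\pi:\Gamma(\omega)\to\Gamma$ sends $\langle(i_0,t_0),\dots,(i_n,t_n)\rangle$ to $\langle i_0,\dots,i_n\rangle$. $\mathcal{L}_\Gamma$ is $\mathcal{L}_t$ plus unary predicates $P_\sigma$ ($\sigma\in\Gamma$) with $P_\sigma=\pi^{-1}(\sigma)$. Tree closure: for $B\subseteq\Gamma(\omega)$, $\mathrm{tcl}(B)$ is the smallest subset of $\Gamma(\omega)$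 containing $\varepsilon$ and every $a\le b$ with $b\in B$, such that whenever $a$ is in it, $a'\ne\varepsilon$, $\mathtt{pred}(a')=a$ and $\lambda(\pi(a'))=1$, then $a'$ is in it. *)

(* Defs.v *)
From Stdlib Require Import List Arith PeanoNat.
Import ListNotations.

(* A node of Gamma(omega): sequence of pairs (i_k, t_k); t_k = None is the
   symbol star, t_k = Some n is n in omega. *)
Definition entry := (nat * option nat)%type.
Definition node := list entry.

Definition entry_eq_dec : forall x y : entry, {x = y} + {x <> y}.
Proof. decide equality; [decide equality; apply Nat.eq_dec | apply Nat.eq_dec]. Defined.

(* Gamma given as a finite list of finite sequences; lambda : true = infinity,
   false = 1. *)
Definition tree_plan (Gam : list (list nat)) (lam : list nat -> bool) : Prop :=
  In [] Gam /\
  (forall s n, In s Gam -> In (firstn n s) Gam) /\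
  lam [] = false.

Definition piG (a : node) : list nat := map fst a.

Definition inGw (Gam : list (list nat)) (lam : list nat -> bool) (a : node) : Prop :=
  In (piG a) Gam /\
  forall k, k < length a ->
    (snd (nth k a (0, None)) = None <-> lam (firstn (S k) (piG a)) = false).

Definition init_seg (a b : node) : Prop := exists u, b = a ++ u.

Fixpoint meet (a b : node) : node :=
  match a, b with
  | x :: a', y :: b' => if entry_eq_dec x y then x :: meet a' b' else []
  | _, _ => []
  end.

Definition predn (a : node) : node := removelast a.

Inductive term : Type :=
| TVar : nat -> term
| TEps : term
| TMeet : term -> term -> term
| TPred : term -> term.

Inductive form : Type :=
| FFalse : form
| FEq : term -> term -> form
| FLe : term -> term -> form
| FP : list nat -> term -> form
| FNot : form -> form
| FAnd : form -> form -> form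
| FOr : form -> form -> form
| FImp : form -> form -> form
| FEx : form -> form
| FAll : form -> form.

Fixpoint teval (env : nat -> node) (t : term) : node :=
  match t with
  | TVar n => env n
  | TEps => []
  | TMeet s u => meet (teval env s) (teval env u)
  | TPred s => predn (teval env s)
  end.

Definition scons (x : node) (env : nat -> node) : nat -> node :=
  fun n => match n with 0 => x | S k => env k end.

Fixpoint sat (Gam : list (list nat)) (lam : list nat -> bool)
    (env : nat -> node) (f : form) : Prop :=
  match f with
  | FFalse => False
  | FEq s u => teval env s = teval env u
  | FLe s u => init_seg (teval env s) (teval env u)
  | FP sg s => piG (teval env s) = sg
  | FNot g => ~ sat Gam lam env g
  | FAnd g h => sat Gam lam env g /\ sat Gam lam env h
  | FOr g h => sat Gam lam env g \/ sat Gam lam env h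
  | FImp g h => sat Gam lam env g -> sat Gam lam env h
  | FEx g => exists x, inGw Gam lam x /\ sat Gam lam (scons x env) g
  | FAll g => forall x, inGw Gam lam x -> sat Gam lam (scons x env) g
  end.

(* Parameter environment: variable 0 is the free variable x, variable k+1 is
   the k-th parameter (unused variables default to the 0-definable root). *)
Definition penv (x : node) (bs : list node) : nat -> node :=
  scons x (fun k => nth k bs []).

Definition acl (Gam : list (list nat)) (lam : list nat -> bool)
    (B : node -> Prop) (a : node) : Prop :=
  inGw Gam lam a /\
  exists (phi : form) (bs : list node),
    (forall b, In b bs -> B b) /\
    sat Gam lam (penv a bs) phi /\
    exists l : list node,
      forall x, inGw Gam lam x -> sat Gam lam (penv x bs) phi -> In x l.

Inductive tcl (Gam : list (list nat)) (lam : list nat -> bool)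
    (B : node -> Prop) : node -> Prop :=
| tcl_root : tcl Gam lam B []
| tcl_below : forall a b, B b -> init_seg a b -> tcl Gam lam B a
| tcl_succ : forall a a', tcl Gam lam B a -> inGw Gam lam a' -> a' <> [] ->
    predn a' = a -> lam (piG a') = false -> tcl Gam lam B a'.

(* Main.v *)
Require Import Defs.
From Stdlib Require Import List Arith PeanoNat Lia Classical FinFun.
Import ListNotations.

Definition node_eq_dec := list_eq_dec entry_eq_dec.

Lemma init_refl a : init_seg a a.
Proof. exists []; rewrite app_nil_r; auto. Qed.
Lemma init_trans a b c : init_seg a b -> init_seg b c -> init_seg a c.
Proof. intros [u ->] [v ->]; exists (u++v); rewrite app_assoc; auto. Qed.
Lemma init_len a b : init_seg a b -> length a <= length b.
Proof. intros [u ->]; rewrite length_app; lia. Qed.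
Lemma init_nil a : init_seg [] a.
Proof. exists a; auto. Qed.
Lemma firstn_app_exact (A : Type) n (l1 l2 : list A) : length l1 = n -> firstn n (l1 ++ l2) = l1.
Proof. intros <-. rewrite firstn_app, Nat.sub_diag, firstn_O, firstn_all, app_nil_r; auto. Qed.
Lemma skipn_app_exact (A : Type) n (l1 l2 : list A) : length l1 = n -> skipn n (l1 ++ l2) = l2.
Proof. intros <-. rewrite skipn_app, Nat.sub_diag, skipn_all; auto. Qed.
Lemma firstn_app_le (A : Type) n (l1 l2 : list A) : n <= length l1 -> firstn n (l1 ++ l2) = firstn n l1.
Proof. intros H. rewrite firstn_app. replace (n - length l1) with 0 by lia. rewrite firstn_O, app_nil_r; auto. Qed.
Lemma skipn_app_le (A : Type) n (l1 l2 : list A) : n <= length l1 -> skipn n (l1 ++ l2) = skipn n l1 ++ l2.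
Proof. intros H. rewrite skipn_app. replace (n - length l1) with 0 by lia. auto. Qed.
Lemma init_firstn n a : init_seg (firstn n a) a.
Proof. exists (skipn n a); symmetry; apply firstn_skipn. Qed.

Lemma init_same_len a b x : init_seg a x -> init_seg b x -> length a = length b -> a = b.
Proof.
  intros [u Hu] [v Hv] Hl. rewrite Hu in Hv.
  assert (E : firstn (length a) (a ++ u) = firstn (length b) (b ++ v)) by (rewrite Hv, Hl; reflexivity).
  rewrite !firstn_app_exact in E; auto.
Qed.
Lemma init_antisym a b : init_seg a b -> init_seg b a -> a = b.
Proof. intros H1 H2. apply (init_same_len a b b); auto using init_refl.
  apply init_len in H1; apply init_len in H2; lia. Qed.

Lemma init_firstn_eq a b : init_seg a b -> firstn (length a) b = a.
Proof. intros [u ->]. apply firstn_app_exact; auto. Qed.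

Lemma init_snoc x c e : init_seg x (c ++ [e]) -> length x <= length c -> init_seg x c.
Proof. intros H Hl. apply init_firstn_eq in H. rewrite firstn_app_le in H by auto.
  rewrite <- H. apply init_firstn. Qed.

Lemma meet_l a b : init_seg (meet a b) a.
Proof.
  revert b; induction a as [|x a IH]; intros [|y b]; simpl; try apply init_nil.
  destruct (entry_eq_dec x y); [|apply init_nil].
  destruct (IH b) as [u Hu]. exists u; simpl; f_equal; exact Hu.
Qed.
Lemma meet_r a b : init_seg (meet a b) b.
Proof.
  revert b; induction a as [|x a IH]; intros [|y b]; simpl; try apply init_nil.
  destruct (entry_eq_dec x y); [|apply init_nil]. subst.
  destruct (IH b) as [u Hu]. exists u; simpl; f_equal; exact Hu.
Qed.
Lemma meet_max z a b : init_seg z a -> init_seg z b -> init_seg z (meet a b).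
Proof.
  revert a b; induction z as [|e z IH]; intros a b; [intros; apply init_nil|].
  intros [u Hu] [v Hv]; subst; simpl.
  destruct (entry_eq_dec e e) as [_|n]; [|contradiction].
  destruct (IH (z ++ u) (z ++ v)) as [w Hw]; [exists u; auto|exists v; auto|].
  exists w; simpl; rewrite Hw; auto.
Qed.

Lemma predn_init x : init_seg (predn x) x.
Proof. destruct x as [|e x]. apply init_nil. exists [last (e::x) (0,None)].
  apply app_removelast_last; discriminate. Qed.
Lemma predn_len x : length (predn x) = length x - 1.
Proof. destruct x as [|e x]. reflexivity.
  assert (H := app_removelast_last (0,None) (l:=e::x) ltac:(discriminate)).
  unfold predn. rewrite H at 2. rewrite length_app; simpl; lia. Qed.

Section Auto.
Variables (Gam : list (list nat)) (lam : list nat -> bool) (f : node -> node).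
Hypotheses (ff : forall x, f (f x) = x) (fnil : f [] = [])
  (flen : forall x, length (f x) = length x)
  (finit : forall x y, init_seg x y -> init_seg (f x) (f y))
  (fpi : forall x, piG (f x) = piG x)
  (fGw : forall x, inGw Gam lam x -> inGw Gam lam (f x)).

Lemma finit_iff x y : init_seg x y <-> init_seg (f x) (f y).
Proof. split; auto. intros H. apply finit in H. rewrite !ff in H; auto. Qed.

Lemma fmeet a b : f (meet a b) = meet (f a) (f b).
Proof.
  apply init_antisym.
  - apply meet_max; apply finit; [apply meet_l|apply meet_r].
  - rewrite <- (ff (meet (f a) (f b))). apply finit.
    rewrite <- (ff a), <- (ff b) at 2. apply meet_max; apply finit; [apply meet_l|apply meet_r].
Qed.

Lemma fpred a : f (predn a) = predn (f a).
Proof.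
  apply (init_same_len _ _ (f a)).
  - apply finit, predn_init.
  - apply predn_init.
  - rewrite flen, !predn_len, flen; auto.
Qed.

Lemma teval_f env env' : (forall n, env' n = f (env n)) -> forall t, teval env' t = f (teval env t).
Proof.
  intros H t; induction t; simpl; auto.
  - rewrite IHt1, IHt2, fmeet; auto.
  - rewrite IHt, fpred; auto.
Qed.

Lemma sat_f phi : forall env env', (forall n, env' n = f (env n)) ->
  (sat Gam lam env phi <-> sat Gam lam env' phi).
Proof.
  induction phi; intros env env' H; simpl; rewrite ?(teval_f env env' H).
  - tauto.
  - split; intros E. rewrite E; auto.
    rewrite <- (ff (teval env t)), <- (ff (teval env t0)), E; auto.
  - apply finit_iff.
  - rewrite fpi; tauto.
  - specialize (IHphi env env' H); tauto.
  - specialize (IHphi1 env env' H); specialize (IHphi2 env env' H); tauto.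
  - specialize (IHphi1 env env' H); specialize (IHphi2 env env' H); tauto.
  - specialize (IHphi1 env env' H); specialize (IHphi2 env env' H); tauto.
  - split.
    + intros [x [Hx Hs]]. exists (f x); split; auto.
      apply (IHphi (scons x env)); auto. intros [|n]; simpl; auto.
    + intros [y [Hy Hs]]. exists (f y); split; auto.
      apply (IHphi (scons (f y) env) (scons y env')); auto. intros [|n]; simpl; auto.
  - split.
    + intros Hx y Hy. apply (IHphi (scons (f y) env) (scons y env')); auto.
      intros [|n]; simpl; auto.
    + intros Hx x Hxg. apply (IHphi (scons x env) (scons (f x) env')); auto.
      intros [|n]; simpl; auto.
Qed.
End Auto.

Definition bnone (o : option nat) := match o with None => false | Some _ => true end.
Definition key (x : node) := map (fun e : entry => (fst e, bnone (snd e))) x.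

Lemma piG_key x : piG x = map fst (key x).
Proof. unfold piG, key; rewrite map_map; reflexivity. Qed.

Lemma key_nth k x : snd (nth k (key x) (0,false)) = bnone (snd (nth k x (0,None))).
Proof. revert k; induction x; intros [|k]; simpl; auto. Qed.

Lemma inGw_key Gam lam x y : key x = key y -> inGw Gam lam x -> inGw Gam lam y.
Proof.
  intros K [H1 H2]. split.
  - rewrite piG_key, <- K, <- piG_key; auto.
  - intros k Hk.
    assert (Lx : length x = length y) by (rewrite <- (length_map (fun e : entry => (fst e, bnone (snd e))) x), <- (length_map (fun e : entry => (fst e, bnone (snd e))) y); exact (f_equal (@length _) K)).
    assert (E : piG x = piG y) by (rewrite !piG_key, K; auto).
    rewrite <- E. rewrite <- H2 by lia.
    assert (N : nth k (key x) (0,false) = nth k (key y) (0,false)) by (rewrite K; auto).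
    apply (f_equal snd) in N; rewrite !key_nth in N.
    destruct (snd (nth k x (0,None))), (snd (nth k y (0,None))); simpl in N; split; intro; congruence.
Qed.

Section Swap.
Variables (c : node) (i n m : nat).
Hypothesis nm : n <> m.
Definition c1 := c ++ [(i, Some n)].
Definition c2 := c ++ [(i, Some m)].
Definition q := S (length c).
Definition g w := if node_eq_dec w c1 then c2 else if node_eq_dec w c2 then c1 else w.
Definition sw x := if Nat.leb q (length x) then g (firstn q x) ++ skipn q x else x.

Lemma c12 : c1 <> c2.
Proof. unfold c1, c2; intros H. apply app_inv_head in H. inversion H; auto. Qed.

Lemma g_len w : length (g w) = length w.
Proof. unfold g, c1, c2; destruct node_eq_dec; [subst; rewrite !length_app; auto|].
  destruct node_eq_dec; [subst; rewrite !length_app; auto|auto]. Qed.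
Lemma g_invol w : g (g w) = w.
Proof. assert (C := c12). unfold g at 2. destruct (node_eq_dec w c1).
  - subst; unfold g; destruct node_eq_dec; [congruence|]; destruct node_eq_dec; congruence.
  - destruct (node_eq_dec w c2).
    + subst; unfold g; destruct node_eq_dec; congruence.
    + unfold g; destruct node_eq_dec; [congruence|]; destruct node_eq_dec; congruence.
Qed.
Lemma g_key w : key (g w) = key w.
Proof. unfold g. destruct node_eq_dec; [subst; unfold key, c1, c2; rewrite !map_app; auto|].
  destruct node_eq_dec; [subst; unfold key, c1, c2; rewrite !map_app; auto|auto]. Qed.

Lemma sw_len x : length (sw x) = length x.
Proof. unfold sw; destruct (Nat.leb_spec q (length x)); auto.
  rewrite length_app, g_len, <- length_app, firstn_skipn; auto. Qed.
Lemma sw_invol x : sw (sw x) = x.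
Proof.
  assert (L := sw_len x). unfold sw at 1. destruct (Nat.leb_spec q (length (sw x))).
  - unfold sw in *. destruct (Nat.leb_spec q (length x)); [|lia].
    assert (Lg : length (g (firstn q x)) = q) by (rewrite g_len, firstn_length_le; auto).
    rewrite firstn_app_exact, skipn_app_exact, g_invol, firstn_skipn; auto.
  - unfold sw in *. destruct (Nat.leb_spec q (length x)); [lia|auto].
Qed.
Lemma sw_key x : key (sw x) = key x.
Proof. unfold sw; destruct (Nat.leb_spec q (length x)); auto.
  unfold key at 1; rewrite map_app. fold (key (g (firstn q x))) (key (skipn q x)).
  rewrite g_key. unfold key; rewrite <- map_app, firstn_skipn; auto. Qed.
Lemma sw_nil : sw [] = [].
Proof. reflexivity. Qed.
Lemma sw_init x y : init_seg x y -> init_seg (sw x) (sw y).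
Proof.
  intros [v ->]. unfold sw. rewrite length_app.
  destruct (Nat.leb_spec q (length x)).
  - destruct (Nat.leb_spec q (length x + length v)); [|lia].
    rewrite firstn_app_le, skipn_app_le by auto. exists v; rewrite app_assoc; auto.
  - destruct (Nat.leb_spec q (length x + length v)); [|exists v; auto].
    assert (Hx : init_seg x (firstn q (x ++ v))).
    { rewrite firstn_app. exists (firstn (q - length x) v). rewrite firstn_all2 by lia; auto. }
    eapply init_trans; [|exists (skipn q (x ++ v)); reflexivity].
    unfold g. destruct node_eq_dec as [E|].
    + rewrite E in Hx. unfold c1 in Hx. apply init_snoc in Hx; [|unfold q in *; lia].
      unfold c2; eapply init_trans; [exact Hx|exists [(i, Some m)]; auto].
    + destruct node_eq_dec as [E|]; auto.
      rewrite E in Hx. unfold c2 in Hx. apply init_snoc in Hx; [|unfold q in *; lia].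
      unfold c1; eapply init_trans; [exact Hx|exists [(i, Some n)]; auto].
Qed.
Lemma sw_fix b : ~ init_seg c1 b -> ~ init_seg c2 b -> sw b = b.
Proof.
  intros H1 H2. unfold sw. destruct (Nat.leb_spec q (length b)); auto.
  unfold g. destruct node_eq_dec as [E|].
  { exfalso; apply H1; rewrite <- E; apply init_firstn. }
  destruct node_eq_dec as [E|].
  { exfalso; apply H2; rewrite <- E; apply init_firstn. }
  apply firstn_skipn.
Qed.
Lemma sw_a a : init_seg c1 a -> sw a = c2 ++ skipn q a.
Proof.
  intros H. assert (L := init_len _ _ H). unfold c1 in L; rewrite length_app in L; simpl in L.
  apply init_firstn_eq in H. unfold c1 in H; rewrite length_app in H; simpl in H.
  replace (length c + 1) with q in H by (unfold q; lia). fold c1 in H.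
  unfold sw. destruct (Nat.leb_spec q (length a)); [|unfold q in *; lia].
  rewrite H. unfold g. destruct node_eq_dec; [auto|congruence].
Qed.
End Swap.

Lemma Gw_prefix Gam lam (HT : tree_plan Gam lam) a b : inGw Gam lam b -> init_seg a b -> inGw Gam lam a.
Proof.
  intros [H1 H2] [u ->]. destruct HT as [_ [Hcl _]].
  assert (Pa : piG (a ++ u) = piG a ++ piG u) by apply map_app.
  split.
  - specialize (Hcl _ (length (piG a)) H1). rewrite Pa, firstn_app_exact in Hcl; auto.
  - intros k Hk. assert (Hk' : k < length (a ++ u)) by (rewrite length_app; lia).
    specialize (H2 k Hk'). rewrite app_nth1 in H2 by auto.
    rewrite Pa, firstn_app_le in H2. exact H2. unfold piG; rewrite length_map; exact Hk.
Qed.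

Lemma tcl_Gw Gam lam (HT : tree_plan Gam lam) B (HB : forall b, B b -> inGw Gam lam b) a :
  tcl Gam lam B a -> inGw Gam lam a.
Proof.
  intros H; induction H; auto.
  - destruct HT as [H0 _]. split; [exact H0|]. simpl; intros; lia.
  - eapply Gw_prefix; eauto.
Qed.

Lemma tcl_inv Gam lam B a : tcl Gam lam B a -> exists b d, (b = [] \/ B b) /\ d <= length a /\
  init_seg (firstn (length a - d) a) b /\
  (forall k, length a - d <= k -> k < length a -> snd (nth k a (0,None)) = None).
Proof.
  intros H; induction H.
  - exists [], 0. simpl. repeat split; auto. apply init_refl. intros; lia.
  - exists b, 0. repeat split; auto. lia. rewrite Nat.sub_0_r, firstn_all; auto. intros; lia.
  - destruct IHtcl as [b [d [Hb [Hd [Hi Hn]]]]].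
    destruct (exists_last H1) as [a0 [e ->]]. unfold predn in H2; rewrite removelast_last in H2; subst a0.
    exists b, (S d). rewrite length_app; simpl.
    replace (length a + 1 - S d) with (length a - d) by lia.
    repeat split; auto. lia. rewrite firstn_app_le by lia; auto.
    intros k H4 H5. destruct (Nat.lt_ge_cases k (length a)).
    + rewrite app_nth1 by auto. apply Hn; lia.
    + replace k with (length a) by lia. rewrite app_nth2, Nat.sub_diag by lia. simpl.
      destruct H0 as [_ H0]. specialize (H0 (length a) ltac:(rewrite length_app; simpl; lia)).
      rewrite app_nth2, Nat.sub_diag in H0 by lia. change (nth 0 [e] (0,None)) with e in H0. apply H0.
      rewrite firstn_all2; auto. unfold piG; rewrite length_map, length_app; simpl; lia.
Qed.

Lemma len_piG (x : node) : length (piG x) = length x.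
Proof. apply length_map. Qed.

Lemma piG_nth k (x : node) : fst (nth k x (0,None)) = nth k (piG x) 0.
Proof. revert k; induction x; intros [|k]; simpl; auto. Qed.

Lemma unique_sol Gam lam a x b j : inGw Gam lam a -> inGw Gam lam x -> piG x = piG a ->
  init_seg (firstn j a) b -> init_seg (firstn j x) b -> j <= length a ->
  (forall k, j <= k -> k < length a -> snd (nth k a (0,None)) = None) -> x = a.
Proof.
  intros Ha Hx Hp H1 H2 Hj Hn.
  assert (L : length x = length a) by (rewrite <- (len_piG x), <- (len_piG a), Hp; reflexivity).
  assert (F : firstn j x = firstn j a) by (apply (init_same_len _ _ b); auto; rewrite !firstn_length_le; lia).
  apply nth_ext with (d := (0,None)) (d' := (0,None)); auto.
  intros k Hk. destruct (Nat.lt_ge_cases k j).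
  - rewrite <- (firstn_skipn j x), <- (firstn_skipn j a), F, !app_nth1; auto; rewrite firstn_length_le; lia.
  - assert (Fs : fst (nth k x (0,None)) = fst (nth k a (0,None))).
    { rewrite !piG_nth, Hp; auto. }
    assert (Sn : snd (nth k a (0,None)) = None) by (apply Hn; [lia| rewrite <- L; exact Hk]).
    assert (Sx : snd (nth k x (0,None)) = None).
    { destruct Hx as [_ Hx], Ha as [_ Ha].
      assert (Hka : k < length a) by (rewrite <- L; exact Hk).
      apply (proj2 (Hx k Hk)). rewrite Hp. apply (proj1 (Ha k Hka)). exact Sn. }
    destruct (nth k x (0,None)), (nth k a (0,None)); simpl in *; subst; auto.
Qed.

Fixpoint predd (d : nat) (t : term) : term := match d with 0 => t | S d => TPred (predd d t) end.

Lemma teval_predd env d : teval env (predd d (TVar 0)) = firstn (length (env 0) - d) (env 0).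
Proof.
  induction d; simpl.
  - rewrite Nat.sub_0_r, firstn_all; auto.
  - rewrite IHd. unfold predn. rewrite removelast_firstn_len, firstn_firstn, length_firstn.
    f_equal. lia.
Qed.

Lemma firstn_S_nth (a : node) k : k < length a -> firstn (S k) a = firstn k a ++ [nth k a (0,None)].
Proof.
  revert k; induction a; intros [|k] Hk; simpl in *; try lia; auto.
  rewrite IHa by lia; auto.
Qed.

Lemma nth_in_or_def (bs : list node) j : In (nth j bs []) bs \/ nth j bs [] = [].
Proof. revert j; induction bs; intros [|j]; simpl; auto. destruct (IHbs j); auto. Qed.

Lemma in_le_max x l : In x l -> x <= list_max l.
Proof. intros H. assert (F := proj1 (list_max_le l (list_max l)) (le_n _)).
  rewrite Forall_forall in F; auto. Qed.

Theorem mainTheorem17 (Gam : list (list nat)) (lam : list nat -> bool)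
  (HT : tree_plan Gam lam) (B : node -> Prop)
  (HB : forall b, B b -> inGw Gam lam b) :
  forall a : node, acl Gam lam B a <-> tcl Gam lam B a.
Proof.
  intros a. split.
  - intros [HaG [phi [bs [HbsB [Hsat [l Hl]]]]]].
    apply NNPP; intro Hnt.
    assert (SP : forall j, j <= length a -> tcl Gam lam B (firstn j a) \/
      exists k, k < j /\ tcl Gam lam B (firstn k a) /\ ~ tcl Gam lam B (firstn (S k) a)).
    { induction j; intros Hj. left; simpl; constructor.
      destruct (IHj ltac:(lia)) as [H|[k [H1 [H2 H3]]]].
      - destruct (classic (tcl Gam lam B (firstn (S j) a))); [left; auto| right; exists j; auto].
      - right; exists k; split; [lia | auto]. }
    destruct (SP (length a) (le_n _)) as [H|[k [Hk [Hc Hc1]]]];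
      [rewrite firstn_all in H; contradiction|].
    set (c := firstn k a) in *.
    assert (Ec1 : firstn (S k) a = c ++ [nth k a (0,None)]) by (apply firstn_S_nth; auto).
    assert (Lc : length c = k) by (apply firstn_length_le; lia).
    remember (nth k a (0,None)) as e eqn:He.
    assert (Gc1 : inGw Gam lam (c ++ [e])) by (rewrite <- Ec1; eapply Gw_prefix; eauto; apply init_firstn).
    assert (Lam : lam (piG (c ++ [e])) = true).
    { destruct (lam (piG (c++[e]))) eqn:El; auto. exfalso. apply Hc1. rewrite Ec1.
      apply (tcl_succ _ _ _ c); auto.
      - intro H; apply app_eq_nil in H; destruct H; discriminate.
      - unfold predn; apply removelast_last. }
    assert (Se : snd e <> None).
    { intro Hs. destruct HaG as [_ HaG]. rewrite He in Hs. apply (proj1 (HaG k Hk)) in Hs.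
      rewrite <- Ec1 in Lam. unfold piG in Lam, Hs. rewrite <- firstn_map in Lam. pose proof (eq_trans (eq_sym Lam) Hs) as X; discriminate X. }
    destruct e as [i [n|]]; [|contradiction Se; reflexivity].
    set (N := list_max (n :: map (fun b : node => match snd (nth k b (0,None)) with Some m => m | None => 0 end) bs)).
    assert (Claim : forall m, N < m -> In ((c ++ [(i, Some m)]) ++ skipn (S k) a) l).
    { intros m Hm.
      assert (nm : n <> m) by (assert (n <= N) by (apply in_le_max; left; auto); lia).
      assert (fa : sw c i n m a = (c ++ [(i, Some m)]) ++ skipn (S k) a).
      { rewrite sw_a.
        - unfold c2, q; rewrite Lc; auto.
        - exact nm.
        - pose proof (init_firstn (S k) a) as X; rewrite Ec1 in X; exact X. }
      rewrite <- fa. apply Hl.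
      - apply (inGw_key Gam lam a); auto. rewrite sw_key; auto.
      - assert (Hrel : forall j, penv (sw c i n m a) bs j = sw c i n m (penv a bs j)).
        { intros [|j]; unfold penv, scons; auto.
          destruct (nth_in_or_def bs j) as [Hin|Hd]; [|rewrite Hd; reflexivity].
          rewrite sw_fix; auto.
          * intro H. apply Hc1. rewrite Ec1. apply (tcl_below _ _ _ _ (nth j bs [])); auto.
          * intros [u Hu]. unfold c2 in Hu.
            assert (Nb : nth k (nth j bs []) (0,None) = (i, Some m)).
            { rewrite Hu, <- app_assoc, app_nth2 by lia. rewrite Lc, Nat.sub_diag; reflexivity. }
            assert (m <= N).
            { apply in_le_max. right. apply in_map_iff. exists (nth j bs []). rewrite Nb; auto. }
            lia. }
        refine (proj1 (sat_f Gam lam (sw c i n m) _ _ _ _ _ _ phi _ _ Hrel) Hsat).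
        all: first [ apply sw_invol; auto | reflexivity | apply sw_len | apply sw_init
          | (intros x; rewrite !piG_key, sw_key; auto)
          | (intros x Hx; apply (inGw_key Gam lam x); auto; rewrite sw_key; auto) | idtac ].
        all: exact nm. }
    assert (ND : NoDup (map (fun j => (c ++ [(i, Some (S (N + j)))]) ++ skipn (S k) a) (seq 0 (S (length l))))).
    { apply Injective_map_NoDup; [|apply seq_NoDup].
      intros j1 j2 E. apply app_inv_tail, app_inv_head in E. inversion E; lia. }
    assert (IN : incl (map (fun j => (c ++ [(i, Some (S (N + j)))]) ++ skipn (S k) a) (seq 0 (S (length l)))) l).
    { intros y Hy. apply in_map_iff in Hy as [j [<- _]]. apply Claim; lia. }
    apply (NoDup_incl_length ND) in IN. rewrite length_map, length_seq in IN. exact (Nat.nle_succ_diag_l _ IN).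
  - intros Htcl. split; [eapply tcl_Gw; eauto|].
    destruct (tcl_inv _ _ _ _ Htcl) as [b [d [Hb [Hd [Hi Hn]]]]].
    assert (HaG : inGw Gam lam a) by (eapply tcl_Gw; eauto).
    assert (Uniq : forall x, inGw Gam lam x -> piG x = piG a -> init_seg (firstn (length x - d) x) b -> x = a).
    { intros x Hx Hp Hxb. assert (L : length x = length a) by (rewrite <- (len_piG x), <- (len_piG a), Hp; reflexivity).
      rewrite L in Hxb. apply (unique_sol Gam lam a x b (length a - d)); auto; lia. }
    destruct Hb as [-> | Bb].
    + exists (FAnd (FP (piG a) (TVar 0)) (FLe (predd d (TVar 0)) TEps)), [].
      split; [simpl; tauto|]. split.
      * simpl. rewrite teval_predd. unfold penv; simpl. auto.
      * exists [a]. intros x Hx Hs. simpl in Hs. rewrite teval_predd in Hs. unfold penv in Hs; simpl in Hs.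
        destruct Hs as [Hp Hl]. left; symmetry; apply Uniq; auto.
    + exists (FAnd (FP (piG a) (TVar 0)) (FLe (predd d (TVar 0)) (TVar 1))), [b].
      split; [simpl; intros ? [<-|[]]; auto|]. split.
      * simpl. rewrite teval_predd. unfold penv; simpl. auto.
      * exists [a]. intros x Hx Hs. simpl in Hs. rewrite teval_predd in Hs. unfold penv in Hs; simpl in Hs.
        destruct Hs as [Hp Hl]. left; symmetry; apply Uniq; auto.
Qed.
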